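(* Let $M$ agents have finite-horizon MDPs $\mathcal{M}^i=(\mathcal{S},\mathcal{A},H,\{P^i_h\},\{r^i_h\})$ with common finite state and action spaces, satisfying: there exist kernels $P^c_h$, $P^{\mathrm{ind},i}_h$ and $\varepsilon_{\mathsf p}\in[0,1)$ such that $P^i_h(s'|s,a)=(1-\varepsilon_{\mathsf p})P^c_h(s'|s,a)+\varepsilon_{\mathsf p}P^{\mathrm{ind},i}_h(s'|s,a)$ for all $i,h,s,a,s'$. Then for any policy $\pi$, any initial state $s_0$, any $(s,a,h)\in\mathcal{S}\times\mathcal{A}\times[H]$ and any $i,j\in[M]$, $$|d^{i,\pi}_{s_0,h}(s,a)-d^{j,\pi}_{s_0,h}(s,a)|\le\varepsilon_{\mathsf p}H.$$
   Context: $d^{i,\pi}_{s_0,h}(s,a)$ denotes the probability that $(s_h,a_h)=(s,a)$ when following $\pi$ in $\mathcal{M}^i$ starting from $s_1=s_0$. *)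

(* Defs.v *)
From HB Require Import structures.
From mathcomp Require Import all_boot all_order all_algebra.
Set Implicit Arguments. Unset Strict Implicit. Unset Printing Implicit Defensive.
Import Order.TTheory GRing.Theory Num.Theory.
Local Open Scope ring_scope.

Section MDP.
Variables (R : realFieldType) (S A : finType).

Definition is_kernel (K : S -> A -> S -> R) : Prop :=
  (forall s a s', 0 <= K s a s') /\ (forall s a, \sum_(s' : S) K s a s' = 1).

Definition is_policy (pi : nat -> S -> A -> R) : Prop :=
  forall h s, (forall a, 0 <= pi h s a) /\ \sum_(a : A) pi h s a = 1.

(* sdist P pi s0 n s = probability that s_{n+1} = s when following pi in
   the MDP with (step-indexed) kernels P, starting from s_1 = s0. *)
Fixpoint sdist (P : nat -> S -> A -> S -> R) (pi : nat -> S -> A -> R)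
  (s0 : S) (n : nat) : S -> R :=
  match n with
  | 0 => fun s => if s == s0 then 1 else 0
  | n'.+1 => fun s' =>
      \sum_(s : S) \sum_(a : A)
        sdist P pi s0 n' s * pi n'.+1 s a * P n'.+1 s a s'
  end.

(* occupancy d^{pi}_{s0,h}(s,a) = Pr[(s_h, a_h) = (s, a)], steps h = 1..H. *)
Definition occupancy (P : nat -> S -> A -> S -> R) (pi : nat -> S -> A -> R)
  (s0 : S) (h : nat) (s : S) (a : A) : R :=
  sdist P pi s0 h.-1 s * pi h s a.

End MDP.

(* Main.v *)
Require Import Defs.
From HB Require Import structures.
From mathcomp Require Import all_boot all_order all_algebra.
From mathcomp Require Import ring lra.
Import Order.TTheory GRing.Theory Num.Theory.
Local Open Scope ring_scope.

Section Aux.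
Variables (R : realFieldType) (S A : finType) (H : nat) (eps : R).
Variable pi : nat -> S -> A -> R.
Hypothesis hpi : is_policy pi.
Variable s0 : S.

Lemma sdist_ge0 (Q : nat -> S -> A -> S -> R) :
  (forall h, (1 <= h <= H)%N -> is_kernel (Q h)) ->
  forall n, (n <= H)%N -> forall s, 0 <= sdist Q pi s0 n s.
Proof.
move=> hK; elim=> [|n IH] hn s /=; first by case: eqP.
have [hk _] := hK n.+1 hn.
apply: sumr_ge0 => t _; apply: sumr_ge0 => b _.
apply: mulr_ge0; last exact: hk.
apply: mulr_ge0; first exact: (IH (ltnW hn) t).
exact: (hpi _ _).1.
Qed.

Lemma sdist_sum1 (Q : nat -> S -> A -> S -> R) :
  (forall h, (1 <= h <= H)%N -> is_kernel (Q h)) ->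
  forall n, (n <= H)%N -> \sum_s sdist Q pi s0 n s = 1.
Proof.
move=> hK; elim=> [|n IH] hn /=.
  by rewrite (bigD1 s0) //= eqxx big1 ?addr0 // => t /negbTE ->.
have [_ hk] := hK n.+1 hn.
rewrite -(IH (ltnW hn)) exchange_big; apply: eq_bigr => t _.
rewrite exchange_big /= -[RHS]mulr1 -(hpi n.+1 t).2 mulr_sumr.
by apply: eq_bigr => b _; rewrite -mulr_sumr hk mulr1.
Qed.

Variables Q1 Q2 : nat -> S -> A -> S -> R.
Hypothesis hK1 : forall h, (1 <= h <= H)%N -> is_kernel (Q1 h).
Hypothesis hK2 : forall h, (1 <= h <= H)%N -> is_kernel (Q2 h).
Hypothesis hD : forall h s a, (1 <= h <= H)%N ->
  \sum_s' `|Q1 h s a s' - Q2 h s a s'| <= eps *+ 2.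

Lemma L1_bound n : (n <= H)%N ->
  \sum_s `|sdist Q1 pi s0 n s - sdist Q2 pi s0 n s| <= eps *+ 2 * n%:R.
Proof.
elim: n => [|n IH] hn.
  by rewrite /= big1 ?mulr0 // => t _; rewrite subrr normr0.
have E : forall s', sdist Q1 pi s0 n.+1 s' - sdist Q2 pi s0 n.+1 s' =
  \sum_t \sum_b (sdist Q1 pi s0 n t * pi n.+1 t b * (Q1 n.+1 t b s' - Q2 n.+1 t b s')
     + (sdist Q1 pi s0 n t - sdist Q2 pi s0 n t) * pi n.+1 t b * Q2 n.+1 t b s').
  move=> s'; rewrite /= -sumrB; apply: eq_bigr => t _; rewrite -sumrB.
  by apply: eq_bigr => b _; ring.
have hk2 := hK2 n.+1 hn.
apply: (@le_trans _ _ (\sum_s' \sum_t \sum_b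
   (sdist Q1 pi s0 n t * pi n.+1 t b * `|Q1 n.+1 t b s' - Q2 n.+1 t b s'|
     + `|sdist Q1 pi s0 n t - sdist Q2 pi s0 n t| * pi n.+1 t b * Q2 n.+1 t b s'))).
  apply: ler_sum => s' _; rewrite E.
  apply: le_trans (ler_norm_sum _ _ _) _; apply: ler_sum => t _.
  apply: le_trans (ler_norm_sum _ _ _) _; apply: ler_sum => b _.
  apply: le_trans (ler_normD _ _) _; rewrite !normrM.
  rewrite (ger0_norm (sdist_ge0 _ hK1 _ (ltnW hn) t)) (ger0_norm ((hpi _ _).1 b)).
  by rewrite (ger0_norm (hk2.1 _ _ _)).
apply: (@le_trans _ _ (\sum_t (sdist Q1 pi s0 n t * eps *+ 2
     + `|sdist Q1 pi s0 n t - sdist Q2 pi s0 n t|))).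
  rewrite exchange_big; apply: ler_sum => t _; rewrite exchange_big /=.
  rewrite -[X in _ <= X]mul1r -(hpi n.+1 t).2 mulr_suml; apply: ler_sum => b _.
  rewrite big_split /= -!mulr_sumr hk2.2 mulr1 mulrDr.
  have hd0 := sdist_ge0 _ hK1 _ (ltnW hn) t.
  have hp0 := (hpi n.+1 t).1 b.
  apply: lerD; last by rewrite mulrC.
  rewrite -mulrnAr (_ : pi n.+1 t b * (sdist Q1 pi s0 n t * (eps *+ 2)) =
     sdist Q1 pi s0 n t * pi n.+1 t b * (eps *+ 2)); last by ring.
  by apply: ler_wpM2l; [apply: mulr_ge0 | apply: hD].
rewrite big_split /= sumrMnl -mulr_suml (sdist_sum1 _ hK1 _ (ltnW hn)) mul1r.
rewrite -natr1 mulrDr mulr1 addrC; apply: lerD => //.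
exact: IH (ltnW hn).
Qed.

End Aux.

Lemma pointwise (R : realFieldType) (S : finType) (x : S -> R) s :
  \sum_t x t = 0 -> `|x s| *+ 2 <= \sum_t `|x t|.
Proof.
move=> hs; rewrite (bigD1 s) //= mulr2n lerD2l.
move: hs; rewrite (bigD1 s) //= => /eqP; rewrite addr_eq0 => /eqP ->.
by rewrite normrN ler_norm_sum.
Qed.

Theorem lemma11 (R : realFieldType) (S A : finType) (M H : nat)
  (P : 'I_M -> nat -> S -> A -> S -> R)
  (Pc : nat -> S -> A -> S -> R)
  (Pind : 'I_M -> nat -> S -> A -> S -> R)
  (eps : R) :
  (forall i h, (1 <= h <= H)%N -> is_kernel (P i h)) ->
  (forall h, (1 <= h <= H)%N -> is_kernel (Pc h)) ->
  (forall i h, (1 <= h <= H)%N -> is_kernel (Pind i h)) ->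
  0 <= eps -> eps < 1 ->
  (forall i h s a s', (1 <= h <= H)%N ->
     P i h s a s' = (1 - eps) * Pc h s a s' + eps * Pind i h s a s') ->
  forall (pi : nat -> S -> A -> R), is_policy pi ->
  forall (s0 s : S) (a : A) (h : nat), (1 <= h <= H)%N ->
  forall i j : 'I_M,
    `|occupancy (P i) pi s0 h s a - occupancy (P j) pi s0 h s a| <= eps * H%:R.
Proof.
move=> hP hPc hPind he0 he1 hdec pi hpi s0 s a h hh i j.
have hD : forall h0 s1 a1, (1 <= h0 <= H)%N ->
    \sum_s' `|P i h0 s1 a1 s' - P j h0 s1 a1 s'| <= eps *+ 2.
  move=> h0 s1 a1 hh0.
  have [hi1 hi2] := hPind i h0 hh0; have [hj1 hj2] := hPind j h0 hh0.
  apply: (@le_trans _ _ (\sum_s' eps * (Pind i h0 s1 a1 s' + Pind j h0 s1 a1 s'))).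
    apply: ler_sum => s' _; rewrite !hdec //.
    rewrite (_ : _ - _ = eps * (Pind i h0 s1 a1 s' - Pind j h0 s1 a1 s')); last by ring.
    rewrite normrM (ger0_norm he0); apply: ler_wpM2l => //.
    apply: le_trans (ler_normB _ _) _.
    by rewrite !ger0_norm.
  by rewrite -mulr_sumr big_split /= hi2 hj2 mulr2n mulrDr mulr1.
have hn : (h.-1 <= H)%N by case/andP: hh => _; apply: leq_trans; apply: leq_pred.
have L := @L1_bound _ _ _ _ _ _ hpi s0 _ _ (hP i) (hP j) hD _ hn.
have hsum : \sum_t (sdist (P i) pi s0 h.-1 t - sdist (P j) pi s0 h.-1 t) = 0.
  by rewrite sumrB (@sdist_sum1 _ _ _ _ _ hpi s0 _ (hP i) _ hn) (@sdist_sum1 _ _ _ _ _ hpi s0 _ (hP j) _ hn) subrr.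
have pw := @pointwise _ _ _ s hsum.
have hx : `|sdist (P i) pi s0 h.-1 s - sdist (P j) pi s0 h.-1 s| <= eps * H%:R.
  have hHn : (h.-1)%:R <= H%:R :> R by rewrite ler_nat.
  have : `|sdist (P i) pi s0 h.-1 s - sdist (P j) pi s0 h.-1 s| *+ 2
     <= eps *+ 2 * (h.-1)%:R by apply: le_trans L.
  rewrite mulrnAl ler_pMn2r // => hk.
  by apply: le_trans hk _; apply: ler_wpM2l.
have hp0 := (hpi h s).1 a.
have hp1 : pi h s a <= 1.
  rewrite -(hpi h s).2 (bigD1 a) //= lerDl; apply: sumr_ge0 => b _; exact: (hpi h s).1.
rewrite /occupancy -mulrBl normrM (ger0_norm hp0).
by apply: le_trans hx; apply: ler_piMr.
Qed.
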